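(* Let $(a,b,c)$ be a cyclic triple, assume (AW), that $(A^b,A^c)$ and $(A^c,A^a)$ are Leonard pairs with eigenvalue orderings $\theta^a_M,\theta^b_M,\theta^c_M$ as in the context. Let $\{|\theta^c_M\rangle\}$ be the eigenbasis of $A^c$ attached to the pair $(A^b,A^c)$, i.e. $A^c|\theta^c_M\rangle=\theta^c_M|\theta^c_M\rangle$ and $A^b|\theta^c_M\rangle=A^{(b,c)}_{M+1,M}|\theta^c_{M+1}\rangle+A^{(b,c)}_{M,M}|\theta^c_M\rangle+A^{(b,c)}_{M-1,M}|\theta^c_{M-1}\rangle$. Then for $0\le M\le 2s$, $$A^a|\theta^c_M\rangle=A^{(a,c)}_{M+1,M}\,\mathfrak h(M)\,|\theta^c_{M+1}\rangle+A^{(a,c)}_{M,M}|\theta^c_M\rangle+A^{(a,c)}_{M-1,M}\,\mathfrak h(M-1)^{-1}|\theta^c_{M-1}\rangle,$$ where $\mathfrak h(k)=q^{4k}\dfrac{\mathsf b^c}{\mathsf c^c}\cdot\dfrac{\mathsf c^cq^{-2k}+r_0q\,\mathsf c^b\mathsf b^a}{\mathsf b^cq^{2k}+r_0q^{-1}\mathsf c^b\mathsf b^a}$ (the last term is absent for $M=0$).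
   Context: $q\in\mathbb C^*$ is not a root of unity, $s\in\{0,\tfrac12,1,\dots\}$, $\mathcal V$ a complex vector space of dimension $2s+1$ with identity $\mathbb I$; $[X,Y]_q=qXY-q^{-1}YX$. Labels range over $\{\cdot,*,\diamond\}$; $A^{\cdot}=A$, $\mathsf b^\cdot=\mathsf b$, $\mathsf c^\cdot=\mathsf c$. Fix nonzero $r_0,\mathsf b^a,\mathsf c^a$ with $r_0^{-2}=\mathsf b\mathsf c=\mathsf b^*\mathsf c^*=\mathsf b^\diamond\mathsf c^\diamond$; $\theta^a_M=\mathsf b^aq^{2M}+\mathsf c^aq^{-2M}$; for distinct $a,b,c$, $\omega^{\{a,b,c\}}=-(q-q^{-1})^2(\theta^a_s\theta^b_s-r_0^{-1}(q^{2s+1}+q^{-2s-1})\theta^c_s)$. For $A,A^*\in\mathrm{End}(\mathcal V)$ set $A^\diamond=\frac{r_0}{q^2-q^{-2}}[A^*,A]_q+\frac{r_0\omega^{\{\cdot,*,\diamond\}}}{(q-q^{-1})(q^2-q^{-2})}\mathbb I$. Hypothesis (AW): for every ordered pair $(a,b)$ of distinct labels, $c$ the remaining one, $[A^a,[A^a,A^b]_q]_{q^{-1}}=-\frac{(q^2-q^{-2})^2}{r_0^2}A^b+\omega^{\{a,b,c\}}A^a+\frac{q+q^{-1}}{r_0}\omega^{\{a,c,b\}}\mathbb I$. A Leonard pair on $\mathcal V$ is a pair of diagonalizable operators such that each has an eigenbasis in which the other is represented by an irreducible tridiagonal matrix; eigenvalue orderings $\theta^x_0,\dots,\theta^x_{2s}$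 are those for which the other operator acts irreducibly tridiagonally on the ordered eigenbasis. A cyclic triple is one of $(\cdot,*,\diamond),( *,\diamond,\cdot),(\diamond,\cdot,* )$. Coefficients: for a cyclic triple $(a,b,c)$, $A^{(b,a)}_{M,M-1}=q^{2-4s}\frac{(1-q^{2M})(\mathsf c^a-\mathsf b^aq^{2M+4s})(\mathsf b^b\mathsf b^cr_0q^{4s-1}+\mathsf b^aq^{2M-2})(\mathsf c^a\mathsf c^cr_0q^{-1}+\mathsf c^bq^{2M-2})}{(\mathsf c^a-\mathsf b^aq^{4M-2})(\mathsf c^a-\mathsf b^aq^{4M})}$, $A^{(b,a)}_{M-1,M}=\frac{(1-q^{2M-4s-2})(\mathsf c^a-\mathsf b^aq^{2M-2})(\mathsf c^a+\mathsf b^b\mathsf b^cr_0q^{2M+4s-1})(\mathsf c^b+\mathsf b^a\mathsf c^cr_0q^{2M-1})}{(\mathsf c^a-\mathsf b^aq^{4M-4})(\mathsf c^a-\mathsf b^aq^{4M-2})}$, $A^{(b,a)}_{M,M}=\theta^b_0-A^{(b,a)}_{M,M+1}-A^{(b,a)}_{M,M-1}$; coefficients with indices outside $\{0,\dots,2s\}$ are $0$. $A^{(a,b)}_{M,N}$ is the image of $A^{(b,a)}_{M,N}$ under $\mathsf b^a\leftrightarrow\mathsf b^b$, $\mathsf c^a\leftrightarrow\mathsf c^b$, $\mathsf b^c\mapsto q^{-4s}\mathsf c^c$, $\mathsf c^c\mapsto q^{4s}\mathsf b^c$. This defines $A^{(x,y)}$ for all six ordered pairs of distinct labels (in particular $A^{(b,c)}$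 is obtained from the cyclic triple $(b,c,a)$ and $A^{(a,c)}$ from $(c,a,b)$). The eigenbasis of $A^c$ attached to the Leonard pair $(A^b,A^c)$ exists (it is determined up to an overall nonzero scalar). *)

(* Defs.v *)
From HB Require Import structures.
From mathcomp Require Import all_boot all_order all_algebra.
From mathcomp Require Import complex reals.
Set Implicit Arguments. Unset Strict Implicit. Unset Printing Implicit Defensive.
Import Order.TTheory GRing.Theory Num.Theory.
Local Open Scope ring_scope.

Inductive label := Ldot | Lstar | Ldia.

Definition label_eqb (x y : label) : bool :=
  match x, y with
  | Ldot, Ldot | Lstar, Lstar | Ldia, Ldia => true
  | _, _ => false end.
Lemma label_eqP : Equality.axiom label_eqb.
Proof. by case; case; constructor. Qed.
HB.instance Definition _ := hasDecEq.Build label label_eqP.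

(* cyclic successor: cyclic triples are (dot,star,dia), (star,dia,dot), (dia,dot,star) *)
Definition lnext (x : label) : label :=
  match x with Ldot => Lstar | Lstar => Ldia | Ldia => Ldot end.

Definition third (x y : label) : label :=
  match x, y with
  | Ldot, Lstar | Lstar, Ldot => Ldia
  | Ldot, Ldia | Ldia, Ldot => Lstar
  | _, _ => Ldot end.

Section Defs.
Variable R : realType.
Local Notation C := R[i].
Variables (q r0 : C) (bb cc : label -> C) (n : nat). (* n = 2s *)

Definition theta (x : label) (M : int) : C :=
  bb x * q ^ (2 * M) + cc x * q ^ (- (2 * M)).

Definition theta_s (x : label) : C := bb x * q ^+ n + cc x * q ^- n.

(* omega^{ {a,b,c} } with a,b symmetric, c distinguished *)
Definition omega (a b c : label) : C :=
  - (q - q^-1) ^+ 2 *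
  (theta_s a * theta_s b - r0^-1 * (q ^+ n.+1 + q ^- n.+1) * theta_s c).

Definition qcomm (p : C) (X Y : 'M[C]_n.+1) : 'M[C]_n.+1 :=
  p *: (X *m Y) - p^-1 *: (Y *m X).

Definition Aop (A Ast : 'M[C]_n.+1) (x : label) : 'M[C]_n.+1 :=
  match x with
  | Ldot => A
  | Lstar => Ast
  | Ldia => (r0 / (q ^+ 2 - q ^- 2)) *: qcomm q Ast A
            + (r0 * omega Ldot Lstar Ldia / ((q - q^-1) * (q ^+ 2 - q ^- 2)))%:M
  end.

Definition AW (A Ast : 'M[C]_n.+1) : Prop :=
  forall x y : label, x != y ->
    qcomm q^-1 (Aop A Ast x) (qcomm q (Aop A Ast x) (Aop A Ast y)) =
      (- (q ^+ 2 - q ^- 2) ^+ 2 / r0 ^+ 2) *: Aop A Ast y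
      + omega x y (third x y) *: Aop A Ast x
      + ((q + q^-1) / r0 * omega x (third x y) y)%:M.

Definition irr_tridiag (T : 'M[C]_n.+1) : Prop :=
  forall i j : 'I_n.+1,
    ((i.+1 < j)%N \/ (j.+1 < i)%N -> T i j = 0) /\
    ((i.+1 == j)%N || (j.+1 == i)%N -> T i j != 0).

Definition leonard_pair_ord (X Y : 'M[C]_n.+1) (thX thY : int -> C) : Prop :=
  (exists P : 'M[C]_n.+1, P \in unitmx /\
     X *m P = P *m diag_mx (\row_(i < n.+1) thX (Posz i)) /\
     irr_tridiag (invmx P *m Y *m P)) /\
  (exists Q : 'M[C]_n.+1, Q \in unitmx /\
     Y *m Q = Q *m diag_mx (\row_(i < n.+1) thY (Posz i)) /\
     irr_tridiag (invmx Q *m X *m Q)).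

Definition in_range (k : int) : bool := (0 <= k) && (k <= n%:Z).

(* Coefficients A^{(b,a)} for a cyclic triple (a,b,c), as functions of the
   parameters (b^a,c^a,b^b,c^b,b^c,c^c).  4s = 2n. *)
Definition coef_low (ba ca b_b cb bc c_c : C) (M : int) : C := (* A_{M,M-1} *)
  q ^ (2 - 2 * n%:Z) *
  ((1 - q ^ (2 * M)) * (ca - ba * q ^ (2 * M + 2 * n%:Z))
   * (b_b * bc * r0 * q ^ (2 * n%:Z - 1) + ba * q ^ (2 * M - 2))
   * (ca * c_c * r0 * q ^ (-1) + cb * q ^ (2 * M - 2)))
  / ((ca - ba * q ^ (4 * M - 2)) * (ca - ba * q ^ (4 * M))).

Definition coef_upp (ba ca b_b cb bc c_c : C) (M : int) : C := (* A_{M-1,M} *)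
  ((1 - q ^ (2 * M - 2 * n%:Z - 2)) * (ca - ba * q ^ (2 * M - 2))
   * (ca + b_b * bc * r0 * q ^ (2 * M + 2 * n%:Z - 1))
   * (cb + ba * c_c * r0 * q ^ (2 * M - 1)))
  / ((ca - ba * q ^ (4 * M - 4)) * (ca - ba * q ^ (4 * M - 2))).

Definition coef_BA (ba ca b_b cb bc c_c : C) (i j : int) : C :=
  let low := fun M => if in_range M && in_range (M - 1)
                      then coef_low ba ca b_b cb bc c_c M else 0 in
  let upp := fun M => if in_range M && in_range (M - 1)
                      then coef_upp ba ca b_b cb bc c_c M else 0 in
  if ~~ (in_range i && in_range j) then 0
  else if i == j + 1 then low i
  else if i + 1 == j then upp j
  else if i == j then (b_b + cb) - upp (i + 1) - low i
         (* theta^b_0 - A_{M,M+1} - A_{M,M-1} *)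
  else 0.

(* A^{(y,x)}_{i,j} for distinct labels x,y:
   - if (x,y,z) is a cyclic triple it is A^{(b,a)} with (a,b,c) = (x,y,z);
   - otherwise (y,x,z) is a cyclic triple and it is A^{(a,b)} with
     (a,b,c) = (y,x,z), obtained by b^a<->b^b, c^a<->c^b,
     b^c |-> q^{-4s} c^c, c^c |-> q^{4s} b^c. *)
Definition Acoef (y x : label) (i j : int) : C :=
  let z := third x y in
  if y == lnext x then coef_BA (bb x) (cc x) (bb y) (cc y) (bb z) (cc z) i j
  else coef_BA (bb x) (cc x) (bb y) (cc y)
               (q ^- (2 * n) * cc z) (q ^+ (2 * n) * bb z) i j.

Definition hfrak (a b c : label) (k : int) : C :=
  q ^ (4 * k) * (bb c / cc c) *
  ((cc c * q ^ (- (2 * k)) + r0 * q * cc b * bb a)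
   / (bb c * q ^ (2 * k) + r0 * q^-1 * cc b * bb a)).

End Defs.

(* the vector |theta_k> = k-th column of P, and 0 for k outside 0..2s *)
Definition vk (F : ringType) (n : nat) (P : 'M[F]_n.+1) (k : int) : 'cV[F]_n.+1 :=
  match k with
  | Posz m => if (m < n.+1)%N then col (inord m) P else 0
  | Negz _ => 0
  end.

(* Main.v *)
Require Import Defs.
From HB Require Import structures.
From mathcomp Require Import all_boot all_order all_algebra.
From mathcomp Require Import complex reals.
From mathcomp Require Import zify ring.
Import Order.TTheory GRing.Theory Num.Theory.
Local Open Scope ring_scope.


Lemma exprz_Posz (F : unitRingType) (x : F) (k : nat) : x ^ (Posz k) = x ^+ k.
Proof. by []. Qed.
Lemma nz_scale (F : fieldType) (g x y : F) : x = y * g -> x != 0 -> y != 0.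
Proof. by move=> -> ; apply: contra => /eqP ->; rewrite mul0r. Qed.

Section S.
Variable R : realType.
Local Notation C := R[i].
Variables (q r0 : C) (bb cc : label -> C) (n : nat) (a b c : label).
Hypothesis qn0 : q != 0.
Hypothesis r0n0 : r0 != 0.
Hypothesis bbn0 : forall x, bb x != 0.
Hypothesis q4 : q ^+ 4 - 1 != 0.
Hypothesis q2 : q ^+ 2 - 1 != 0.
Hypothesis ccE : forall x, cc x = r0^-2 / bb x.

Ltac triv := rewrite ?bbn0 ?r0n0 ?qn0 ?expf_neq0 //.
Ltac nzs := match goal with H : is_true (?x != 0) |- is_true (?y != 0) =>
   first [ apply: (@nz_scale _ 1 _ _ _ H); by field; triv
         | apply: (@nz_scale _ (q * q)^-1 _ _ _ H); by field; triv
         | apply: (@nz_scale _ (q * q) _ _ _ H); by field; triv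
         | apply: (@nz_scale _ (r0 ^+ 2 * bb c)^-1 _ _ _ H); by field; triv
         | apply: (@nz_scale _ (r0 * q * bb a)^-1 _ _ _ H); by field; triv
         | apply: (@nz_scale _ (r0 ^+ 2 * bb a * bb c)^-1 _ _ _ H); by field; triv ] end.
Ltac sides := repeat (apply/andP; split); triv; try nzs.
Ltac normq := rewrite ?ccE; rewrite ?(@mulr_natl int) ?(@mulrS int) ?mulr0n ?addr0 ?opprD ?opprK;
  rewrite ?(expfzDr _ _ qn0) -?invr_expz ?expr1z ?exprz_Posz;
  rewrite -?mul2n ?mul2n -?addnn ?exprD ?exprS ?expr0.

Let clbc := coef_low q r0 n (bb c) (cc c) (bb b) (cc b) (q ^- (2 * n) * cc a) (q ^+ (2 * n) * bb a).
Let cubc := coef_upp q r0 n (bb c) (cc c) (bb b) (cc b) (q ^- (2 * n) * cc a) (q ^+ (2 * n) * bb a).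
Let clac := coef_low q r0 n (bb c) (cc c) (bb a) (cc a) (bb b) (cc b).
Let cuac := coef_upp q r0 n (bb c) (cc c) (bb a) (cc a) (bb b) (cc b).
Let Kc := r0 / (q ^+ 2 - q ^- 2).
Let th := theta q bb cc c.
Let hf := hfrak q r0 bb cc a b c.

Lemma id_i (M : nat) :
  1 - r0 ^+ 2 * bb c ^+ 2 * q ^+ (4 * M + 2) != 0 ->
  1 - r0 ^+ 2 * bb c ^+ 2 * q ^+ (4 * M + 4) != 0 ->
  bb a + r0 * q ^+ (2 * M + 1) * bb b * bb c != 0 ->
  Kc * (q * th (Posz M + 1) - q^-1 * th (Posz M)) * clbc (Posz M + 1)
  = clac (Posz M + 1) * hf (Posz M).
Proof.
have _ := (qn0, r0n0, bbn0, q4, q2, ccE, a, b, c, n).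
rewrite /clbc /clac /Kc /th /hf /coef_low /coef_upp /theta /hfrak.
normq => H1 H2 H3.
field; sides.
Qed.

Lemma id_iii (m : nat) :
  1 - r0 ^+ 2 * bb c ^+ 2 * q ^+ (4 * m) != 0 ->
  1 - r0 ^+ 2 * bb c ^+ 2 * q ^+ (4 * m + 2) != 0 ->
  bb b + r0 * q ^+ (2 * m + 1) * bb a * bb c != 0 ->
  bb a + r0 * q ^+ (2 * m + 1) * bb b * bb c != 0 ->
  Kc * (q * th (Posz m.+1 - 1) - q^-1 * th (Posz m.+1)) * cubc (Posz m.+1)
  = cuac (Posz m.+1) / hf (Posz m.+1 - 1).
Proof.
have _ := (qn0, r0n0, bbn0, q4, q2, ccE, a, b, c, n).
rewrite /cubc /cuac /Kc /th /hf /coef_low /coef_upp /theta /hfrak.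
normq => H1 H2 H3 H4.
field; sides.
Qed.

Let gam := r0 * omega q r0 bb cc n b c a / ((q - q^-1) * (q ^+ 2 - q ^- 2)).

Lemma id_ii_int (m : nat) :
  1 - r0 ^+ 2 * bb c ^+ 2 * q ^+ (4 * m + 2) != 0 ->
  1 - r0 ^+ 2 * bb c ^+ 2 * q ^+ (4 * m + 4) != 0 ->
  1 - r0 ^+ 2 * bb c ^+ 2 * q ^+ (4 * m + 6) != 0 ->
  Kc * (q - q^-1) * th (Posz m.+1) *
    (bb b + cc b - cubc (Posz m.+1 + 1) - clbc (Posz m.+1)) + gam
  = bb a + cc a - cuac (Posz m.+1 + 1) - clac (Posz m.+1).
Proof.
have _ := (qn0, r0n0, bbn0, q4, q2, ccE, a, b, c, n).
rewrite /cubc /cuac /clbc /clac /gam /omega /theta_s /Kc /th /coef_low /coef_upp /theta.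
normq => H1 H2 H3.
field; sides.
Qed.

Lemma id_ii_0 :
  1 - r0 ^+ 2 * bb c ^+ 2 != 0 ->
  1 - r0 ^+ 2 * bb c ^+ 2 * q ^+ 2 != 0 ->
  Kc * (q - q^-1) * th (Posz 0) *
    (bb b + cc b - cubc (Posz 0 + 1) - 0) + gam
  = bb a + cc a - cuac (Posz 0 + 1) - 0.
Proof.
have _ := (qn0, r0n0, bbn0, q4, q2, ccE, a, b, c, n).
rewrite /cubc /cuac /gam /omega /theta_s /Kc /th /coef_upp /theta.
normq => H1 H2.
field; sides.
Qed.

Lemma id_ii_n :
  1 - r0 ^+ 2 * bb c ^+ 2 * q ^+ (4 * n) / q ^+ 2 != 0 ->
  1 - r0 ^+ 2 * bb c ^+ 2 * q ^+ (4 * n) != 0 ->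
  Kc * (q - q^-1) * th (Posz n) *
    (bb b + cc b - 0 - clbc (Posz n)) + gam
  = bb a + cc a - 0 - clac (Posz n).
Proof.
have _ := (qn0, r0n0, bbn0, q4, q2, ccE, a, b, c, n).
rewrite /clbc /clac /gam /omega /theta_s /Kc /th /coef_low /theta.
normq => H1 H2.
field; sides.
Qed.

Lemma id_ii_00 : n = 0%N ->
  Kc * (q - q^-1) * th (Posz 0) *
    (bb b + cc b - 0 - 0) + gam
  = bb a + cc a - 0 - 0.
Proof.
have _ := (qn0, r0n0, bbn0, q4, q2, ccE, a, b, c, n).
move=> n0; rewrite /gam /omega /theta_s /Kc /th /theta n0.
normq.
field; sides.
Qed.

Ltac splitall := repeat match goal with H : is_true (_ && _) |- _ => case/andP: H => ? ? end.

Lemma low_nz (m : nat) : clbc (Posz m + 1) != 0 ->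
  [/\ 1 - r0 ^+ 2 * bb c ^+ 2 * q ^+ (4 * m + 2) != 0,
      1 - r0 ^+ 2 * bb c ^+ 2 * q ^+ (4 * m + 4) != 0 &
      bb b + r0 * q ^+ (2 * m + 1) * bb a * bb c != 0].
Proof.
have _ := (qn0, r0n0, bbn0, q4, q2, ccE, a, b, c, n).
rewrite /clbc /coef_low; normq => H.
rewrite !mulf_eq0 !invr_eq0 ?mulf_eq0 !negb_or in H; splitall.
split; nzs.
Qed.

Lemma upp_nz (m : nat) : cubc (Posz m.+1) != 0 ->
  [/\ 1 - r0 ^+ 2 * bb c ^+ 2 * q ^+ (4 * m) != 0,
      1 - r0 ^+ 2 * bb c ^+ 2 * q ^+ (4 * m + 2) != 0 &
      bb a + r0 * q ^+ (2 * m + 1) * bb b * bb c != 0].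
Proof.
have _ := (qn0, r0n0, bbn0, q4, q2, ccE, a, b, c, n).
rewrite /cubc /coef_upp; normq => H.
rewrite !mulf_eq0 !invr_eq0 ?mulf_eq0 !negb_or in H; splitall.
split; nzs.
Qed.
End S.


Section LA.
Variable R : realType.
Local Notation C := R[i].
Variable n : nat.
Implicit Types (P Q X Y T : 'M[C]_n.+1).

Local Notation e k := (vk (1%:M : 'M[C]_n.+1) k).

Lemma vkE P k : vk P k = P *m e k.
Proof.
case: k => [j|j] /=; last by rewrite mulmx0.
by case: ifP => _; rewrite ?mulmx0 // !colE mul1mx.
Qed.

Lemma vk_ord P (i : 'I_n.+1) : vk P (Posz i) = col i P.
Proof. by rewrite /= ltn_ord inord_val. Qed.

Lemma e_entry (k : int) (i : 'I_n.+1) : e k i 0 = (k == Posz i)%:R.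
Proof.
case: k => [j|j] /=; last by rewrite mxE.
case: ifP => hj; last first.
  rewrite mxE; case: eqP => // [[ji]]; move: hj; by rewrite ji ltn_ord.
rewrite colE mul1mx mxE eqxx andbT.
have -> : (Posz j == Posz i) = (i == inord j :> 'I_n.+1).
  apply/eqP/eqP => [[->]|->]; [by rewrite inord_val | by rewrite inordK].
by [].
Qed.

Lemma col_nz P (i : 'I_n.+1) : P \in unitmx -> col i P != 0.
Proof.
move=> uP; apply/eqP => h.
have : delta_mx i 0 = invmx P *m col i P :> 'cV[C]_n.+1 by rewrite colE mulKmx.
rewrite h mulmx0 => /matrixP /(_ i 0); rewrite !mxE !eqxx /=.
by move/eqP; rewrite oner_eq0.
Qed.

Lemma tri_ker T (w : 'cV[C]_n.+1) l :
  irr_tridiag T -> T *m w = l *: w -> w 0 0 = 0 -> w = 0.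
Proof.
move=> irr Tw w0.
have key : forall k, (k <= n)%N -> forall i : 'I_n.+1, (i <= k)%N -> w i 0 = 0.
  elim=> [|k IH] kn i ik.
    have -> : i = 0 by apply/val_inj => /=; lia.
    by [].
  have [ilk|] := leqP i k; first by apply: IH => //; lia.
  move=> ki; have ie : i = inord k.+1 by apply/val_inj; rewrite /= inordK; lia.
  rewrite ie; set k' : 'I_n.+1 := inord k.
  have k'E : (k' : nat) = k by rewrite /k' inordK // ltnS ltnW.
  have k1E : ((inord k.+1 : 'I_n.+1) : nat) = k.+1 by rewrite inordK //.
  have := Tw; move/matrixP/(_ k' 0); rewrite !mxE (IH (ltnW kn) k') ?mulr0; last by rewrite k'E.
  rewrite (bigD1 (inord k.+1)) //= big1 ?addr0.
    have Tn0 : T k' (inord k.+1) != 0.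
      by case: (irr k' (inord k.+1)) => _; apply; rewrite k'E k1E eqxx.
    by move/eqP; rewrite mulf_eq0 (negPf Tn0) /= => /eqP.
  move=> j jne.
  have [jlk|kj] := leqP j k; first by rewrite (IH (ltnW kn)) ?mulr0.
  have jk2 : (k.+1 < j)%N.
    rewrite ltn_neqAle kj andbT; apply/eqP => h; move/eqP: jne; apply.
    by apply/val_inj; rewrite /= k1E; lia.
  case: (irr k' j) => /(_ _) -> ; first by rewrite mul0r.
  by left; rewrite k'E.
apply/matrixP => i j; rewrite (ord1 j) mxE; apply: (key n) => //; have := ltn_ord i; lia.
Qed.


Lemma distinct P1 P X (th : 'I_n.+1 -> C) :
  P1 \in unitmx -> irr_tridiag (invmx P1 *m X *m P1) -> P \in unitmx ->
  (forall M : 'I_n.+1, X *m col M P = th M *: col M P) ->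
  forall i j : 'I_n.+1, th i = th j -> i = j.
Proof.
move=> uP1 irr uP hX i j thij.
set T := invmx P1 *m X *m P1.
have Tu : forall k : 'I_n.+1, T *m (invmx P1 *m col k P) = th k *: (invmx P1 *m col k P).
  by move=> k; rewrite /T -!mulmxA mulKVmx // hX scalemxAr.
have u00 : forall k : 'I_n.+1, (invmx P1 *m col k P) 0 0 != 0.
  move=> k; apply/eqP => h0; have h := @tri_ker _ _ _ irr (Tu k) h0.
  by move: (@col_nz _ k uP); rewrite -(mulKVmx uP1 (col k P)) h mulmx0 eqxx.
set u := invmx P1 *m col i P; set u' := invmx P1 *m col j P.
set w := u' 0 0 *: u - u 0 0 *: u'.
have Tw : T *m w = th i *: w.
  rewrite /w mulmxBr -!scalemxAr /u /u' Tu Tu -thij.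
  by apply/matrixP => r s; rewrite !mxE; ring.
have w0 : w 0 0 = 0 by rewrite /w !mxE mulrC subrr.
have wz := @tri_ker _ _ _ irr Tw w0.
have : P *m (u' 0 0 *: (delta_mx i 0 : 'cV[C]_n.+1) - u 0 0 *: delta_mx j 0) = 0.
  rewrite mulmxBr -!scalemxAr -!colE.
  have : P1 *m w = 0 by rewrite wz mulmx0.
  by rewrite /w mulmxBr -!scalemxAr !mulKVmx.
move/(congr1 (mulmx (invmx P))); rewrite mulKmx // mulmx0 => /matrixP/(_ j 0).
rewrite !mxE !eqxx /=.
case: (eqVneq i j) => [//|nij].
rewrite ?(negPf nij) ?(eq_sym j i) ?(negPf nij) /= mulr0 mulr1 sub0r => /eqP; rewrite oppr_eq0 => h.
by move: (u00 i); rewrite mxE (eqP h) eqxx.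
Qed.


Lemma coef_nz X Y P (thX thY : int -> C) (co : int -> int -> C) :
  leonard_pair_ord Y X thY thX -> P \in unitmx ->
  (forall M : 'I_n.+1, X *m vk P (Posz M) = thX (Posz M) *: vk P (Posz M)) ->
  (forall M : 'I_n.+1, Y *m vk P (Posz M) =
     co (Posz M + 1) (Posz M) *: vk P (Posz M + 1)
   + co (Posz M) (Posz M) *: vk P (Posz M)
   + co (Posz M - 1) (Posz M) *: vk P (Posz M - 1)) ->
  forall j : nat, (j < n)%N ->
    co (Posz j + 1) (Posz j) != 0 /\ co (Posz j.+1 - 1) (Posz j.+1) != 0.
Proof.
move=> [[P1 [uP1 [_ irrT]]] [Q [uQ [XQ irrS]]]] uP hX hY j jn.
have hX' : forall M : 'I_n.+1, X *m col M P = thX (Posz M) *: col M P.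
  by move=> M; rewrite -vk_ord hX.
have dist := @distinct P1 P X (fun i : 'I_n.+1 => thX (Posz i)) uP1 irrT uP hX'.
set D := diag_mx (\row_(i < n.+1) thX (Posz i)).
have QX : invmx Q *m X = D *m invmx Q.
  by rewrite -[invmx Q *m X](mulmxK uQ) -(mulmxA (invmx Q) X Q) XQ mulKmx.
set W := fun k : int => invmx Q *m vk P k.
have WD : forall k i : 'I_n.+1, i != k -> W (Posz k) i 0 = 0.
  move=> k i ik.
  have : D *m W (Posz k) = thX (Posz k) *: W (Posz k).
    by rewrite /W mulmxA -QX -mulmxA hX -scalemxAr.
  move/matrixP/(_ i 0); rewrite mul_diag_mx !mxE => /eqP; rewrite -subr_eq0 -mulrBl mulf_eq0.
  case/orP => [|/eqP //]; rewrite subr_eq0 => /eqP /dist /eqP; by rewrite (negPf ik).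
have Wnz : forall k : 'I_n.+1, W (Posz k) k 0 != 0.
  move=> k; apply/eqP => h.
  have W0 : W (Posz k) = 0.
    apply/matrixP => i l; rewrite (ord1 l) [RHS]mxE.
    by case: (eqVneq i k) => [->|ik]; [exact: h | exact: WD].
  move: (@col_nz _ k uP); rewrite -vk_ord -(mulKVmx uQ (vk P _)) -/(W _) W0 mulmx0 eqxx //.
have Went : forall (k : int) (i : 'I_n.+1), W k i 0 = if k == Posz i then W (Posz i) i 0 else 0.
  move=> k i; case: (boolP (k == Posz i)) => [/eqP -> //| ki].
  case: k ki => [m|m] ki; last by rewrite /W /= mulmx0 mxE.
  case: (ltnP m n.+1) => hm; last first.
    by rewrite /W /= ltnNge hm /= mulmx0 mxE.
  have -> : Posz m = Posz (Ordinal hm) by [].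
  apply: WD; apply: contra ki => /eqP ->; by [].
set S := invmx Q *m Y *m Q.
have SQ : invmx Q *m Y = S *m invmx Q by rewrite /S mulmxK.
have hW : forall M : 'I_n.+1, S *m W (Posz M) =
     co (Posz M + 1) (Posz M) *: W (Posz M + 1)
   + co (Posz M) (Posz M) *: W (Posz M)
   + co (Posz M - 1) (Posz M) *: W (Posz M - 1).
  by move=> M; rewrite /W mulmxA -SQ -mulmxA hY !mulmxDr -!scalemxAr.
have SWe : forall (M i : 'I_n.+1), (S *m W (Posz M)) i 0 = S i M * W (Posz M) M 0.
  move=> M i; rewrite mxE (bigD1 M) //= big1 ?addr0 // => l lM.
  by rewrite WD // mulr0.
have jE : ((inord j : 'I_n.+1) : nat) = j by rewrite inordK // ltnS ltnW.
have j1E : ((inord j.+1 : 'I_n.+1) : nat) = j.+1 by rewrite inordK.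
have Sn1 : S (inord j.+1) (inord j) != 0.
  by case: (irrS (inord j.+1) (inord j)) => _; apply; rewrite jE j1E eqxx orbT.
have Sn2 : S (inord j) (inord j.+1) != 0.
  by case: (irrS (inord j) (inord j.+1)) => _; apply; rewrite jE j1E eqxx.
have Wn1 := Wnz (inord j); have Wn2 := Wnz (inord j.+1).
rewrite jE in Wn1; rewrite j1E in Wn2.
clearbody S W.
split.
- have := hW (inord j); move/matrixP/(_ (inord j.+1) 0).
  rewrite SWe !mxE (Went (Posz (inord j) + 1) (inord j.+1)) (Went (Posz (inord j)) (inord j.+1)).
  rewrite (Went (Posz (inord j) - 1) (inord j.+1)) jE j1E.
  have -> : (Posz j + 1 == Posz j.+1) by apply/eqP; lia.
  have -> : (Posz j == Posz j.+1) = false by apply/eqP; lia.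
  have -> : (Posz j - 1 == Posz j.+1) = false by apply/eqP; lia.
  rewrite !mulr0 !addr0 => E.
  apply/eqP => c0; move: E; rewrite c0 mul0r => /eqP; apply/negP; exact: mulf_neq0.
- have := hW (inord j.+1); move/matrixP/(_ (inord j) 0).
  rewrite SWe !mxE (Went (Posz (inord j.+1) + 1) (inord j)) (Went (Posz (inord j.+1)) (inord j)).
  rewrite (Went (Posz (inord j.+1) - 1) (inord j)) jE j1E.
  have -> : (Posz j.+1 + 1 == Posz j) = false by apply/eqP; lia.
  have -> : (Posz j.+1 == Posz j) = false by apply/eqP; lia.
  have -> : (Posz j.+1 - 1 == Posz j) by apply/eqP; lia.
  rewrite !mulr0 !add0r => E.
  apply/eqP => c0; move: E; rewrite c0 mul0r => /eqP; apply/negP; exact: mulf_neq0.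
Qed.

End LA.


Section MX.
Variable R : realType.
Local Notation C := R[i].
Variable n : nat.
Implicit Types (W V A B : 'M[C]_n.+1).

Lemma qcL1 (p k c0 : C) W V :
  qcomm p (k *: W + c0%:M) V = k *: qcomm p W V + (c0 * (p - p^-1)) *: V.
Proof.
rewrite /qcomm mulmxDl mulmxDr -!scalemxAl -!scalemxAr mul_scalar_mx mul_mx_scalar.
move: (W *m V) (V *m W) => WV VW.
by apply/matrixP => i j; rewrite !mxE; ring.
Qed.

Lemma qcL1' (p k c0 : C) W V :
  qcomm p V (k *: W + c0%:M) = k *: qcomm p V W + (c0 * (p - p^-1)) *: V.
Proof.
rewrite /qcomm mulmxDl mulmxDr -!scalemxAl -!scalemxAr mul_scalar_mx mul_mx_scalar.
move: (W *m V) (V *m W) => WV VW.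
by apply/matrixP => i j; rewrite !mxE; ring.
Qed.

Lemma qcL2 (p : C) W V : qcomm p W V = - qcomm p^-1 V W.
Proof.
rewrite /qcomm invrK; move: (W *m V) (V *m W) => WV VW.
by apply/matrixP => i j; rewrite !mxE; ring.
Qed.

Lemma qcL3 (p : C) A B : qcomm p A (qcomm p B A) = - qcomm p^-1 A (qcomm p A B).
Proof.
rewrite /qcomm invrK !mulmxBr !mulmxBl -!scalemxAl -!scalemxAr !mulmxA.
move: (A *m B *m A) (A *m A *m B) (B *m A *m A) => ABA AAB BAA.
by apply/matrixP => i j; rewrite !mxE; ring.
Qed.


Lemma nz_scale1 (F : fieldType) (x y : F) : x = y -> x != 0 -> y != 0.
Proof. by move=> ->. Qed.
Ltac sides1 := repeat (apply/andP; split); rewrite ?expf_neq0 //;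
  match goal with H : is_true (?x != 0) |- is_true (?y != 0) =>
   apply: (@nz_scale1 _ _ _ _ H); by field end.

Lemma Zform (q r0 : C) (bb cc : label -> C) (A Ast : 'M[C]_n.+1) (a b c : label) :
  q != 0 -> r0 != 0 -> q ^+ 2 - 1 != 0 -> q ^+ 4 - 1 != 0 ->
  b = lnext a -> c = lnext b -> AW q r0 bb cc A Ast ->
  Aop q r0 bb cc A Ast a =
    (r0 / (q ^+ 2 - q ^- 2)) *: qcomm q (Aop q r0 bb cc A Ast c) (Aop q r0 bb cc A Ast b)
    + (r0 * omega q r0 bb cc n b c a / ((q - q^-1) * (q ^+ 2 - q ^- 2)))%:M.
Proof.
move=> qn0 r0n0 q2 q4 -> -> hAW.
case: a => /=.
- have h := hAW Lstar Ldot isT; rewrite /= in h.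
  rewrite qcL1 qcL2 h.
  apply/matrixP => i j; rewrite !mxE /omega; case: eqP => _; rewrite ?mulr1n ?mulr0n.
  + by field; sides1.
  + by field; sides1.
- have h := hAW Ldot Lstar isT; rewrite /= in h.
  rewrite qcL1' qcL3 h.
  apply/matrixP => i j; rewrite !mxE /omega; case: eqP => _; rewrite ?mulr1n ?mulr0n.
  + by field; sides1.
  + by field; sides1.
- by [].
Qed.
End MX.


Section CBA.
Variable R : realType.
Local Notation C := R[i].
Variables (q r0 : C) (n : nat) (ba ca b_b cb bc c_c : C).
Let cB := coef_BA q r0 n ba ca b_b cb bc c_c.
Let cL := coef_low q r0 n ba ca b_b cb bc c_c.
Let cU := coef_upp q r0 n ba ca b_b cb bc c_c.

Ltac dec := rewrite /cB /coef_BA /in_range; repeat (case: ifP => //=); move=> *; try (exfalso; lia).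

Lemma cBA_low (m : nat) : (m < n)%N -> cB (Posz m + 1) (Posz m) = cL (Posz m + 1).
Proof.
move=> mn; dec.
Qed.

Lemma cBA_upp (m : nat) : (m < n)%N -> cB (Posz m.+1 - 1) (Posz m.+1) = cU (Posz m.+1).
Proof. move=> mn; dec. Qed.

Lemma cBA_diag (m : nat) : (m <= n)%N -> cB (Posz m) (Posz m) =
  b_b + cb - (if (m < n)%N then cU (Posz m + 1) else 0) - (if (0 < m)%N then cL (Posz m) else 0).
Proof. move=> mn; dec. Qed.
End CBA.


Lemma Zv (R : realType) (n : nat) (q K g : R[i]) (Z X Y : 'M[R[i]]_n.+1)
  (v1 v0 vm : 'cV[R[i]]_n.+1) (t1 t0 tm al be de : R[i]) :
  Z = K *: qcomm q X Y + g%:M ->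
  X *m v1 = t1 *: v1 -> X *m v0 = t0 *: v0 -> X *m vm = tm *: vm ->
  Y *m v0 = al *: v1 + be *: v0 + de *: vm ->
  Z *m v0 = (K * (q * t1 - q^-1 * t0) * al) *: v1 + (K * (q - q^-1) * t0 * be + g) *: v0
            + (K * (q * tm - q^-1 * t0) * de) *: vm.
Proof.
move=> -> h1 h0 hm hY.
rewrite mulmxDl mul_scalar_mx -scalemxAl /qcomm mulmxBl -!scalemxAl -!mulmxA hY h0.
rewrite -scalemxAr hY !mulmxDr -!scalemxAr h1 h0 hm.
by apply/matrixP => i j; rewrite !mxE; ring.
Qed.
Arguments Zv {R n q K g Z X Y v1 v0 vm t1 t0 tm al be de}.

Lemma vk_top (R : realType) (n : nat) (P : 'M[R[i]]_n.+1) : vk P (Posz n + 1) = 0.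
Proof. by rewrite (_ : Posz n + 1 = Posz n.+1) /= ?ltnn // -addn1 PoszD. Qed.

Lemma vk_bot (R : realType) (n : nat) (P : 'M[R[i]]_n.+1) : vk P (Posz 0 - 1) = 0.
Proof. by []. Qed.

Theorem lemma3p6 (R : realType) (q r0 : R[i]) (bb cc : label -> R[i]) (n : nat)
  (A Ast : 'M[R[i]]_n.+1) (a b c : label) (P : 'M[R[i]]_n.+1) :
  q != 0 ->
  (forall k : nat, (0 < k)%N -> q ^+ k != 1) ->
  r0 != 0 -> (forall x, bb x != 0) -> (forall x, cc x != 0) ->
  (forall x, r0 ^- 2 = bb x * cc x) ->
  b = lnext a -> c = lnext b ->
  AW q r0 bb cc A Ast ->
  leonard_pair_ord (Aop q r0 bb cc A Ast b) (Aop q r0 bb cc A Ast c)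
    (theta q bb cc b) (theta q bb cc c) ->
  leonard_pair_ord (Aop q r0 bb cc A Ast c) (Aop q r0 bb cc A Ast a)
    (theta q bb cc c) (theta q bb cc a) ->
  P \in unitmx ->
  (forall M : 'I_n.+1,
     Aop q r0 bb cc A Ast c *m vk P (Posz M) = theta q bb cc c (Posz M) *: vk P (Posz M)) ->
  (forall M : 'I_n.+1,
     Aop q r0 bb cc A Ast b *m vk P (Posz M) =
       Acoef q r0 bb cc n b c (Posz M + 1) (Posz M) *: vk P (Posz M + 1)
     + Acoef q r0 bb cc n b c (Posz M) (Posz M) *: vk P (Posz M)
     + Acoef q r0 bb cc n b c (Posz M - 1) (Posz M) *: vk P (Posz M - 1)) ->
  forall M : 'I_n.+1,
    Aop q r0 bb cc A Ast a *m vk P (Posz M) =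
      (Acoef q r0 bb cc n a c (Posz M + 1) (Posz M) * hfrak q r0 bb cc a b c (Posz M))
        *: vk P (Posz M + 1)
    + Acoef q r0 bb cc n a c (Posz M) (Posz M) *: vk P (Posz M)
    + (Acoef q r0 bb cc n a c (Posz M - 1) (Posz M) / hfrak q r0 bb cc a b c (Posz M - 1))
        *: vk P (Posz M - 1).
Proof.
move=> qn0 hq r0n0 bbn0 ccn0 hrc hb hc hAW LP1 LP2 uP hX hY M.
have ccE : forall x, cc x = r0 ^- 2 / bb x by move=> x; rewrite (hrc x) mulrC mulKf.
have q2 : q ^+ 2 - 1 != 0 by rewrite subr_eq0 hq.
have q4 : q ^+ 4 - 1 != 0 by rewrite subr_eq0 hq.
have Zf := @Zform R n q r0 bb cc A Ast a b c qn0 r0n0 q2 q4 hb hc hAW.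
have hAbc : forall i j, Acoef q r0 bb cc n b c i j =
   coef_BA q r0 n (bb c) (cc c) (bb b) (cc b) (q ^- (2 * n) * cc a) (q ^+ (2 * n) * bb a) i j.
  by move=> i j; rewrite hc hb; case: (a).
have hAac : forall i j, Acoef q r0 bb cc n a c i j =
   coef_BA q r0 n (bb c) (cc c) (bb a) (cc a) (bb b) (cc b) i j.
  by move=> i j; rewrite hc hb; case: (a).
have hXk : forall k : int, Aop q r0 bb cc A Ast c *m vk P k = theta q bb cc c k *: vk P k.
  case => [j|j]; last by rewrite /= mulmx0 scaler0.
  case: (ltnP j n.+1) => hj; last by rewrite /= ltnNge hj /= mulmx0 scaler0.
  exact: (hX (Ordinal hj)).
have NZ := @coef_nz R n _ _ P _ _ _ LP1 uP hX hY.
have LN : forall m, (m < n)%N ->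
  [/\ 1 - r0 ^+ 2 * bb c ^+ 2 * q ^+ (4 * m + 2) != 0,
      1 - r0 ^+ 2 * bb c ^+ 2 * q ^+ (4 * m + 4) != 0 &
      bb b + r0 * q ^+ (2 * m + 1) * bb a * bb c != 0].
  move=> m mn; apply: (@low_nz R q r0 bb cc n a b c qn0 r0n0 bbn0 q4 q2 ccE m).
  have [h _] := NZ m mn.
  by rewrite hAbc (@cBA_low _ _ _ _ _ _ _ _ _ _ _ mn) in h.
have UN : forall m, (m < n)%N ->
  [/\ 1 - r0 ^+ 2 * bb c ^+ 2 * q ^+ (4 * m) != 0,
      1 - r0 ^+ 2 * bb c ^+ 2 * q ^+ (4 * m + 2) != 0 &
      bb a + r0 * q ^+ (2 * m + 1) * bb b * bb c != 0].
  move=> m mn; apply: (@upp_nz R q r0 bb cc n a b c qn0 r0n0 bbn0 q4 q2 ccE m).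
  have [_ h] := NZ m mn.
  by rewrite hAbc (@cBA_upp _ _ _ _ _ _ _ _ _ _ _ mn) in h.
have key := Zv Zf (hXk _) (hXk _) (hXk _) (hY M).
rewrite key; clear key.
have hm := ltn_ord M.
move: (nat_of_ord M) hm => m hm.
congr (_ + _ + _).
- case: (ltnP m n) => mn.
  + congr (_ *: _); rewrite hAbc hAac !(@cBA_low _ _ _ _ _ _ _ _ _ _ _ mn).
    have [h1 h2 _] := LN m mn; have [_ _ h3] := UN m mn.
    exact: (@id_i R q r0 bb cc n a b c qn0 r0n0 bbn0 q4 q2 ccE m h1 h2 h3).
  + have -> : m = n by lia.
    by rewrite vk_top !scaler0.
- congr (_ *: _); rewrite hAbc hAac !(@cBA_diag _ _ _ _ _ _ _ _ _ _ _ (hm : (m <= n)%N)).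
  case: m hm => [|m'] hm.
  + case: (posnP n) => [n0|n0].
    * rewrite ?ltnn /=.
      exact: (@id_ii_00 R q r0 bb cc n a b c qn0 r0n0 bbn0 q4 q2 ccE n0).
    * rewrite ?ltnn /=.
      have [h1 h2 _] := UN 0%N n0; rewrite muln0 expr0 mulr1 in h1; rewrite muln0 add0n in h2.
      exact: (@id_ii_0 R q r0 bb cc n a b c qn0 r0n0 bbn0 q4 q2 ccE h1 h2).
  + case: (ltnP m'.+1 n) => mn.
    * rewrite /=.
      have m'n : (m' < n)%N by lia.
      have [h1 h2 _] := LN m' m'n; have [_ h3 _] := UN m'.+1 mn.
      rewrite (_ : (4 * m'.+1 + 2 = 4 * m' + 6)%N) in h3; last by lia.
      exact: (@id_ii_int R q r0 bb cc n a b c qn0 r0n0 bbn0 q4 q2 ccE m' h1 h2 h3).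
    * have e : m'.+1 = n by lia.
      rewrite /=.
      have m'n : (m' < n)%N by lia.
      have [h1 h2 _] := LN m' m'n.
      have E1 : q ^+ (4 * n) = q ^+ (4 * m' + 2) * q ^+ 2.
        by rewrite -exprD -e; congr (_ ^+ _); lia.
      have E2 : (4 * n = 4 * m' + 4)%N by lia.
      have g1 : 1 - r0 ^+ 2 * bb c ^+ 2 * q ^+ (4 * n) / q ^+ 2 != 0.
        by rewrite E1 mulrA mulfK ?expf_neq0.
      have g2 : 1 - r0 ^+ 2 * bb c ^+ 2 * q ^+ (4 * n) != 0 by rewrite E2.
      rewrite e.
      exact: (@id_ii_n R q r0 bb cc n a b c qn0 r0n0 bbn0 q4 q2 ccE g1 g2).
- case: m hm => [|m'] hm.
  + by rewrite vk_bot !scaler0.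
  + congr (_ *: _).
    have mn : (m' < n)%N by lia.
    rewrite hAbc hAac !(@cBA_upp _ _ _ _ _ _ _ _ _ _ _ mn).
    have [h1 h2 h4] := UN m' mn; have [_ _ h3] := LN m' mn.
    exact: (@id_iii R q r0 bb cc n a b c qn0 r0n0 bbn0 q4 q2 ccE m' h1 h2 h3 h4).
Qed.
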